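(* Let $m\ge2$ be an integer with $m\not\equiv2\pmod4$ and let $p,q$ be positive integers. If $\zeta_m^p,\zeta_m^{-p},\zeta_m^q,\zeta_m^{-q}$ are $\mathbb{Q}$-linearly independent, then for every choice of signs, $\Delta=\frac{\pm\zeta_m^p\pm\zeta_m^{-p}\pm\zeta_m^q\pm\zeta_m^{-q}}{2}$ is not an algebraic integer, where $\zeta_m=e^{\frac{2\pi}{m}i}$. *)

(* Defs.v *)
From mathcomp Require Import all_boot all_order all_algebra all_field.
Set Implicit Arguments. Unset Strict Implicit. Unset Printing Implicit Defensive.
Import Order.TTheory GRing.Theory Num.Theory.
Local Open Scope ring_scope.

(* zeta m = e^{2 pi i / m}: m.-root (-1) is the m-th root of -1 with minimal
   nonnegative argument, i.e. e^{i pi / m} (for m >= 2); its square is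
   e^{2 pi i / m}. *)
Definition zeta (m : nat) : algC := (m.-root (-1)) ^+ 2.

Definition Qlin_indep (s : seq algC) : Prop :=
  forall c : seq rat, size c = size s ->
    \sum_(i < size s) ratr (nth 0 c i) * nth 0 s i = 0 ->
    forall i, nth 0 c i = 0.

Definition sgn (b : bool) : algC := (-1) ^+ b.

(* Main.v *)
Require Import Defs.
From mathcomp Require Import all_boot all_order all_algebra all_field.
From mathcomp Require Import ring zify.
Import Order.TTheory GRing.Theory Num.Theory.
Local Open Scope ring_scope.

Definition D2 (z : algC) := z / 2 \in Aint.

Lemma two_neq0 : (2 : algC) != 0.
Proof. by rewrite pnatr_eq0. Qed.

Lemma not_D2_1 : ~ D2 1.
Proof.
rewrite /D2 mul1r => H.
have Hr : (2 : algC)^-1 \in Crat by rewrite rpredV rpred_nat.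
have := norm_intr_ge1 (Cint_rat_Aint Hr H).
rewrite invr_eq0 two_neq0 => /(_ isT).
by rewrite normfV ger0_norm // invf_ge1 // (ler_nat _ 2 1).
Qed.

Lemma D2D x y : D2 x -> D2 y -> D2 (x + y).
Proof. by rewrite /D2 mulrDl; apply: rpredD. Qed.

Lemma D2N x : D2 x -> D2 (- x).
Proof. by rewrite /D2 mulNr rpredN. Qed.

Lemma D2B x y : D2 x -> D2 y -> D2 (x - y).
Proof. by move=> ? ?; apply: D2D => //; apply: D2N. Qed.

Lemma D2Ml x w : D2 x -> w \in Aint -> D2 (w * x).
Proof. by rewrite /D2 -mulrA => ? ?; apply: rpredM. Qed.

Lemma D2Mr x w : D2 x -> w \in Aint -> D2 (x * w).
Proof. by rewrite mulrC; apply: D2Ml. Qed.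

Lemma D2_2 w : w \in Aint -> D2 (2 * w).
Proof. by rewrite /D2 mulrC mulrA mulVf ?two_neq0 // mul1r. Qed.

Lemma D2_4 z : (z / 4 \in Aint) -> D2 z.
Proof.
move=> H; rewrite /D2; have -> : z / 2 = (z / 4) * 2.
  by field; rewrite ?two_neq0 ?pnatr_eq0.
by apply: rpredM => //; apply: rpred_nat.
Qed.

Lemma D2_0 : D2 0.
Proof. by rewrite /D2 mul0r rpred0. Qed.

Lemma D2_sum n (F : 'I_n -> algC) : (forall i, D2 (F i)) -> D2 (\sum_(i < n) F i).
Proof.
move=> H; apply: (big_ind D2); [exact: D2_0 | exact: D2D | move=> i _; exact: H].
Qed.

Lemma unity_Aint N (x : algC) : (0 < N)%N -> x ^+ N = 1 -> x \in Aint.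
Proof.
move=> HN Hx; apply: (Aint_unity_root HN).
by rewrite unity_rootE Hx.
Qed.

Lemma geom_fact (x : algC) k : 1 - x ^+ k = (1 - x) * \sum_(i < k) x ^+ i.
Proof.
by rewrite -opprB subrX1 -mulNr opprB.
Qed.

Lemma sum_pow_Aint (x : algC) k : x \in Aint -> \sum_(i < k) x ^+ i \in Aint.
Proof. by move=> Hx; apply: rpred_sum => i _; apply: rpredX. Qed.

Lemma odd_decomp N : (0 < N)%N -> exists e d, odd d /\ N = (2 ^ e * d)%N.
Proof.
elim/ltn_ind: N => N IH HN.
case Ho: (odd N); first by exists 0%N, N; rewrite mul1n.
have HN2 : N = (N./2).*2 by rewrite -[N in LHS]odd_double_half Ho add0n.
have lt : (N./2 < N)%N by rewrite [X in (_ < X)%N]HN2 -addnn; move: HN; rewrite HN2 -addnn; lia.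
have pos : (0 < N./2)%N by move: HN; rewrite HN2 -addnn; lia.
have [e [d [Hd HE]]] := IH _ lt pos.
exists e.+1, d; split => //.
by rewrite HN2 HE expnS -mulnA -muln2 mulnC.
Qed.

Lemma odd_kill (x w : algC) e d : odd d -> x ^+ (2 ^ e * d) = 1 -> x ^+ (2 ^ e) != 1 ->
  w \in Aint -> D2 ((1 - x) * w) -> D2 w.
Proof.
move=> Hd Hx Hz Hw H.
have xA : x \in Aint by apply: (@unity_Aint _ x _ Hx); rewrite muln_gt0 expn_gt0 /=; case: (d) Hd.
set z := x ^+ (2 ^ e).
have Hk : forall k, D2 ((1 - z ^+ k) * w).
  move=> k; rewrite /z -exprM geom_fact mulrAC.
  by apply: D2Mr => //; apply: sum_pow_Aint.
have Hs : \sum_(k < d) z ^+ k = 0.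
  have : (z - 1) * \sum_(k < d) z ^+ k = 0 by rewrite -subrX1 /z -exprM Hx subrr.
  by move/eqP; rewrite mulf_eq0 subr_eq0 (negbTE Hz) /= => /eqP.
have Hdw : D2 (d%:R * w).
  have -> : d%:R * w = \sum_(k < d) (1 - z ^+ k) * w.
    by rewrite -mulr_suml sumrB Hs subr0 sumr_const card_ord mulr_natl.
  by apply: D2_sum.
have -> : w = d%:R * w - 2 * ((d./2)%:R * w).
  have Ed : (d%:R : algC) = 1 + (d./2)%:R * 2.
    by rewrite -[d in LHS]odd_double_half Hd -muln2 natrD natrM.
  rewrite Ed; ring.
by apply: D2B => //; apply: D2_2; apply: rpredM => //; apply: rpred_nat.
Qed.

Lemma sq_eq1 (u : algC) : u ^+ 2 = 1 -> u = 1 \/ u = -1.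
Proof.
move=> H; have : (u - 1) * (u + 1) = 0 by rewrite -subr_sqr expr1n H subrr.
move/eqP; rewrite mulf_eq0 subr_eq0 addr_eq0 => /orP[/eqP->|/eqP->]; by [left|right].
Qed.

Lemma pow4_eq1 (u : algC) : u ^+ 4 = 1 -> u ^+ 2 = 1 \/ u ^+ 2 = -1.
Proof. by move=> H; apply: sq_eq1; rewrite -exprM. Qed.

Lemma D2_unit (x : algC) : x ^+ 4 = 1 -> ~ D2 x.
Proof.
move=> H Hx; apply: not_D2_1; rewrite -H (_ : 4 = 3 + 1)%N // exprD expr1.
apply: D2Ml => //; apply: rpredX; exact: (@unity_Aint 4 x).
Qed.

Lemma L1' t : forall x : algC, x ^+ (2 ^ t) = 1 -> D2 (1 - x) -> x ^+ 2 = 1.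
Proof.
elim: t => [|t IH] x Hx H.
  by move: Hx; rewrite expn0 expr1 => ->; rewrite expr1n.
have xA : x \in Aint by apply: (@unity_Aint _ x _ Hx); rewrite expn_gt0.
have H4 : x ^+ 4 = 1.
  rewrite (_ : 4 = 2 * 2)%N // exprM; apply: IH.
    by rewrite -exprM -expnS.
  rewrite (_ : 1 - x ^+ 2 = (1 - x) * (1 + x)); last by ring.
  by apply: D2Mr => //; apply: rpredD.
case: (@pow4_eq1 x H4) => // Hm.
have HN4 : (- x) ^+ 4 = 1 by rewrite exprNn H4 mulr1 -signr_odd.
exfalso; apply: (@D2_unit _ HN4).
have : ((1 - x) / 2) ^+ 2 \in Aint by apply: rpredX.
rewrite (_ : ((1 - x) / 2) ^+ 2 = (- x) / 2) //.
rewrite expr_div_n (_ : (1 - x) ^+ 2 = 1 - 2 * x + x ^+ 2); last by ring.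
rewrite Hm; field; rewrite ?two_neq0 ?pnatr_eq0 //.
Qed.

Lemma L1 N (x : algC) : (0 < N)%N -> x ^+ N = 1 -> D2 (1 - x) -> x ^+ 2 = 1.
Proof.
move=> HN Hx H; have [e [d [Hd HE]]] := @odd_decomp _ HN.
have [He|He] := eqVneq (x ^+ (2 ^ e)) 1; first exact: (@L1' e x He).
exfalso; apply: not_D2_1.
by apply: (@odd_kill x 1 e d Hd _ He Aint1); [rewrite -HE | rewrite mulr1].
Qed.

Lemma neg_pow t (x : algC) : x ^+ (2 ^ t) = 1 -> x != 1 -> exists j, - x = x ^+ j.
Proof.
elim: t => [|t IH] Hx Hn; first by move: Hx; rewrite expn0 expr1 => E; rewrite E eqxx in Hn.
have [E|E] := eqVneq (x ^+ (2 ^ t)) 1; first exact: IH.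
have : (x ^+ (2 ^ t)) ^+ 2 = 1 by rewrite -exprM -expnSr.
case/sq_eq1 => E'; first by rewrite E' eqxx in E.
by exists (2 ^ t).+1; rewrite exprS mulrC E' mulN1r.
Qed.

Lemma plus_factor t (x : algC) : x ^+ (2 ^ t) = 1 -> x != 1 ->
  exists2 g, g \in Aint & 1 + x = (1 - x) * g.
Proof.
move=> Hx Hn; have [j Hj] := @neg_pow t x Hx Hn.
have xA : x \in Aint by apply: (@unity_Aint _ x _ Hx); rewrite expn_gt0.
exists (\sum_(i < j) x ^+ i); first exact: sum_pow_Aint.
by rewrite -geom_fact -Hj opprK.
Qed.

Lemma four_neq0 : (4 : algC) != 0.
Proof. by rewrite pnatr_eq0. Qed.

Lemma L4_aux (u v : algC) : u ^+ 2 = -1 -> v ^+ 2 = -1 ->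
  (1 - u) * (1 - v) / 4 \in Aint -> False.
Proof.
move=> Hu Hv H.
have : (u - v) * (u + v) = 0 by rewrite -subr_sqr Hu Hv subrr.
move/eqP; rewrite mulf_eq0 subr_eq0 addr_eq0 => /orP[/eqP E|/eqP E]; subst u.
  have HN4 : (- v) ^+ 4 = 1.
    by rewrite exprNn (_ : 4 = 2 * 2)%N // !exprM Hv; ring.
  apply: (@D2_unit _ HN4); rewrite /D2.
  suff -> : - v / 2 = (1 - v) * (1 - v) / 4 by [].
  rewrite (_ : (1 - v) * (1 - v) = 1 - 2 * v + v ^+ 2); last by ring.
  rewrite Hv; field; rewrite ?two_neq0 ?four_neq0 ?pnatr_eq0 //.
apply: not_D2_1; rewrite /D2.
suff -> : 1 / 2 = (1 - - v) * (1 - v) / 4 by [].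
rewrite (_ : (1 - - v) * (1 - v) = 1 - v ^+ 2); last by ring.
rewrite Hv; field; rewrite ?two_neq0 ?four_neq0 ?pnatr_eq0 //.
Qed.

Lemma L4 t : forall x y : algC, x ^+ (2 ^ t) = 1 -> y ^+ (2 ^ t) = 1 ->
  x ^+ 2 != 1 -> y ^+ 2 != 1 -> D2 ((1 - x) * (1 - y)) ->
  x ^+ 2 = -1 /\ y ^+ 2 = -1.
Proof.
elim: t => [|t IH] x y Hx Hy nx ny H.
  by move: Hx; rewrite expn0 expr1 => E; rewrite E expr1n eqxx in nx.
have xA : x \in Aint by apply: (@unity_Aint _ x _ Hx); rewrite expn_gt0.
have yA : y \in Aint by apply: (@unity_Aint _ y _ Hy); rewrite expn_gt0.
have nx1 : x != 1 by apply: contraNneq nx => ->; rewrite expr1n.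
have ny1 : y != 1 by apply: contraNneq ny => ->; rewrite expr1n.
have [g gA Hg] := @plus_factor _ x Hx nx1.
have [h hA Hh] := @plus_factor _ y Hy ny1.
have Hx' : (x ^+ 2) ^+ (2 ^ t) = 1 by rewrite -exprM -expnS.
have Hy' : (y ^+ 2) ^+ (2 ^ t) = 1 by rewrite -exprM -expnS.
have Q4 : (1 - x ^+ 2) * (1 - y ^+ 2) / 4 \in Aint.
  have -> : (1 - x ^+ 2) * (1 - y ^+ 2) / 4 = ((1 - x) * (1 - y) / 2) ^+ 2 * g * h.
    rewrite (_ : 1 - x ^+ 2 = (1 - x) * (1 + x)); last by ring.
    rewrite (_ : 1 - y ^+ 2 = (1 - y) * (1 + y)); last by ring.
    rewrite Hg Hh; field; rewrite ?two_neq0 ?four_neq0 ?pnatr_eq0 //.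
  by apply: rpredM => //; apply: rpredM => //; apply: rpredX.
have [Ex|Ex] := eqVneq ((x ^+ 2) ^+ 2) 1.
  case: (@sq_eq1 _ Ex) => Ex2; first by rewrite Ex2 eqxx in nx.
  split => //.
  have Dy : D2 (1 - y ^+ 2).
    by move: Q4; rewrite Ex2 /D2; congr (_ \in Aint); field; rewrite ?two_neq0 ?four_neq0 ?pnatr_eq0.
  have := @L1' t _ Hy' Dy; case/sq_eq1 => // E; by rewrite E eqxx in ny.
have [Ey|Ey] := eqVneq ((y ^+ 2) ^+ 2) 1.
  case: (@sq_eq1 _ Ey) => Ey2; first by rewrite Ey2 eqxx in ny.
  split => //.
  have Dx : D2 (1 - x ^+ 2).
    by move: Q4; rewrite Ey2 /D2; congr (_ \in Aint); field; rewrite ?two_neq0 ?four_neq0 ?pnatr_eq0.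
  have := @L1' t _ Hx' Dx; case/sq_eq1 => // E; by rewrite E eqxx in nx.
have [E1 E2] := IH _ _ Hx' Hy' Ex Ey (@D2_4 _ Q4).
exfalso; exact: (@L4_aux _ _ E1 E2 Q4).
Qed.

Lemma step2 N (x y : algC) : (0 < N)%N -> x ^+ N = 1 -> y ^+ N = 1 ->
  D2 ((1 - x) * (1 - y)) ->
  x ^+ 2 = 1 \/ y ^+ 2 = 1 \/ (x ^+ 2 = -1 /\ y ^+ 2 = -1).
Proof.
move=> HN Hx Hy H; have [e [d [Hd HE]]] := @odd_decomp _ HN.
have xA : x \in Aint by apply: (@unity_Aint _ x HN Hx).
have yA : y \in Aint by apply: (@unity_Aint _ y HN Hy).
have [Ex|Ex] := eqVneq (x ^+ (2 ^ e)) 1; last first.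
  right; left; apply: (@L1 N y HN Hy).
  apply: (@odd_kill x (1 - y) e d Hd _ Ex _ H); first by rewrite -HE.
  by apply: rpredB => //; exact: Aint1.
have [Ey|Ey] := eqVneq (y ^+ (2 ^ e)) 1; last first.
  left; apply: (@L1 N x HN Hx).
  apply: (@odd_kill y (1 - x) e d Hd _ Ey _); first by rewrite -HE.
    by apply: rpredB => //; exact: Aint1.
  by rewrite mulrC.
have [nx|nx] := eqVneq (x ^+ 2) 1; first by left.
have [ny|ny] := eqVneq (y ^+ 2) 1; first by right; left.
by right; right; exact: (@L4 e x y Ex Ey nx ny H).
Qed.

Lemma Qlin4 (w0 w1 w2 w3 : algC) (c0 c1 c2 c3 : rat) :
  Qlin_indep [:: w0; w1; w2; w3] ->
  ratr c0 * w0 + ratr c1 * w1 + ratr c2 * w2 + ratr c3 * w3 = 0 ->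
  [/\ c0 = 0, c1 = 0, c2 = 0 & c3 = 0].
Proof.
move=> H E.
have := H [:: c0; c1; c2; c3] erefl.
rewrite !big_ord_recl big_ord0 /= addr0 !addrA => /(_ E) Hc.
by split; [exact: (Hc 0%N) | exact: (Hc 1%N) | exact: (Hc 2%N) | exact: (Hc 3%N)].
Qed.

Lemma D2_sgn (w : algC) (s : bool) : w \in Aint -> D2 ((1 - sgn s) * w).
Proof.
move=> wA; case: s; rewrite /sgn /=.
  by rewrite expr1 opprK (_ : 1 + 1 = 2 :> algC) //; apply: D2_2.
by rewrite expr0 subrr mul0r; exact: D2_0.
Qed.

Theorem lemma9p16 (m p q : nat) :
  (2 <= m)%N -> (m %% 4 != 2)%N -> (0 < p)%N -> (0 < q)%N ->
  Qlin_indep [:: zeta m ^+ p; zeta m ^- p; zeta m ^+ q; zeta m ^- q] ->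
  forall s1 s2 s3 s4 : bool,
    (sgn s1 * zeta m ^+ p + sgn s2 * zeta m ^- p
     + sgn s3 * zeta m ^+ q + sgn s4 * zeta m ^- q) / 2 \notin Aint.
Proof.
move=> Hm _ _ _ Hind s1 s2 s3 s4.
have Hm0 : (0 < m)%N by apply: leq_trans Hm.
have Hz : zeta m ^+ m = 1.
  by rewrite /zeta -exprM mulnC exprM rootCK // sqrrN expr1n.
set a := zeta m ^+ p in Hind *; set b := zeta m ^+ q in Hind *.
have Ha : a ^+ m = 1 by rewrite /a -exprM mulnC exprM Hz expr1n.
have Hb : b ^+ m = 1 by rewrite /b -exprM mulnC exprM Hz expr1n.
have a0 : a != 0.
  apply/eqP => E; move: Ha; rewrite E expr0n gtn_eqF //= => /eqP; by rewrite eq_sym oner_eq0.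
have b0 : b != 0.
  apply/eqP => E; move: Hb; rewrite E expr0n gtn_eqF //= => /eqP; by rewrite eq_sym oner_eq0.
have Hai : a^-1 ^+ m = 1 by rewrite exprVn Ha invr1.
have Hbi : b^-1 ^+ m = 1 by rewrite exprVn Hb invr1.
have aA := @unity_Aint _ _ Hm0 Ha.
have bA := @unity_Aint _ _ Hm0 Hb.
have aiA := @unity_Aint _ _ Hm0 Hai.
have biA := @unity_Aint _ _ Hm0 Hbi.
apply/negP => HS.
have DS : D2 (a + a^-1 + b + b^-1).
  have -> : a + a^-1 + b + b^-1 =
    ((1 - sgn s1) * a + (1 - sgn s2) * a^-1 + (1 - sgn s3) * b + (1 - sgn s4) * b^-1)
    + (sgn s1 * a + sgn s2 * a^-1 + sgn s3 * b + sgn s4 * b^-1) by ring.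
  by apply: D2D => //; repeat apply: D2D; apply: D2_sgn.
set x := a^-1 * b; set y := a^-1 * b^-1.
have Dp : D2 ((1 + x) * (1 + y)).
  have -> : (1 + x) * (1 + y) = a^-1 * (a + a^-1 + b + b^-1).
    by rewrite /x /y; field; rewrite a0 b0.
  exact: D2Ml.
have Dm : D2 ((1 - x) * (1 - y)).
  have -> : (1 - x) * (1 - y) = (1 + x) * (1 + y) - 2 * (x + y) by ring.
  apply: D2B => //; apply: D2_2; rewrite /x /y.
  by apply: rpredD; apply: rpredM.
have Hx : x ^+ m = 1 by rewrite /x exprMn Hai Hb mulr1.
have Hy : y ^+ m = 1 by rewrite /y exprMn Hai Hbi mulr1.
have ratr1 : ratr (1 : rat) = (1 : algC) by rewrite rmorph1.
have ratrN1 : ratr (-1 : rat) = (-1 : algC) by rewrite rmorphN rmorph1.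
have ratr0 : ratr (0 : rat) = (0 : algC) by rewrite rmorph0.
case: (@step2 m x y Hm0 Hx Hy Dm) => [Ex|[Ey|[Ex Ey]]].
- have Eb : b = a * x by rewrite /x mulrA mulfV // mul1r.
  case: (@sq_eq1 _ Ex) => E; rewrite E in Eb.
    have [] := @Qlin4 _ _ _ _ 1 0 (-1) 0 Hind.
      by rewrite ratr1 ratr0 ratrN1 Eb; ring.
    by move/eqP; rewrite oner_eq0.
  have [] := @Qlin4 _ _ _ _ 1 0 1 0 Hind.
    by rewrite ratr1 ratr0 Eb; ring.
  by move/eqP; rewrite oner_eq0.
- have Eb : b^-1 = a * y by rewrite /y mulrA mulfV // mul1r.
  case: (@sq_eq1 _ Ey) => E; rewrite E in Eb.
    have [] := @Qlin4 _ _ _ _ 1 0 0 (-1) Hind.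
      by rewrite ratr1 ratr0 ratrN1 Eb; ring.
    by move/eqP; rewrite oner_eq0.
  have [] := @Qlin4 _ _ _ _ 1 0 0 1 Hind.
    by rewrite ratr1 ratr0 Eb; ring.
  by move/eqP; rewrite oner_eq0.
- have Eb2 : b ^+ 2 = b^-1 ^+ 2.
    have : x ^+ 2 = y ^+ 2 by rewrite Ex Ey.
    rewrite /x /y !exprMn; apply: mulfI.
    by rewrite expf_neq0 // invr_eq0.
  have Eb : b ^+ 4 = 1.
    rewrite (_ : 4 = 2 + 2)%N // exprD {1}Eb2 -exprMn mulVf //.
    by rewrite expr1n.
  case: (@pow4_eq1 _ Eb) => E.
    have Ebi : b^-1 = b.
      by rewrite -[b^-1]mulr1 -E expr2 mulrA mulVf // mul1r.
    have [] := @Qlin4 _ _ _ _ 0 0 1 (-1) Hind.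
      by rewrite ratr1 ratr0 ratrN1 Ebi; ring.
    by move=> _ _ /eqP; rewrite oner_eq0.
  have Ebi : b^-1 = - b.
    by rewrite -[b^-1]mulr1 -[1]opprK -E expr2 mulrN mulrA mulVf // mul1r.
  have [] := @Qlin4 _ _ _ _ 0 0 1 1 Hind.
    by rewrite ratr1 ratr0 Ebi; ring.
  by move=> _ _ /eqP; rewrite oner_eq0.
Qed.
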